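(* Let $f$, $Q$, $L$, $d_Q$ and $T\in\mathbb{N}_0$ be as in the context, and let the sequences $(x_t)_{t=0}^{T+1}$, $(u_t)_{t=0}^{T+1}$, $(z_t)_{t=0}^{T}$, $(\hat x_t)_{t=1}^{T+1}$, $(\gamma_t)_{t=0}^{T+1}$, $(\Gamma_t)_{t=0}^{T+1}$, $(\tau_t)_{t=0}^{T}$, $(L_t)_{t=0}^{T}$ be generated by the algorithm described in the context. Then for every $0\le t\le T$, \[ \Gamma_t f(u_t)+\sum_{k=0}^{t-1}(L_{k+1}-L_k)\Big(d_Q(z_{k+1})-\tfrac12\|z_k-\hat x_{k+1}\|^2\Big)\le \psi_t, \] where \[ \psi_t:=\min_{x\in Q}\Big\{\sum_{k=0}^{t}\gamma_k\big(f(x_k)+\langle\nabla f(x_k),x-x_k\rangle\big)+L_t d_Q(x)\Big\}. \]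
   Context: $\mathbb{R}^n$ carries the standard scalar product $\langle\cdot,\cdot\rangle$ and a (possibly different) norm $\|\cdot\|$, with dual norm $\|u\|_*=\max\{\langle u,x\rangle:\|x\|=1\}$. $Q\subseteq\mathbb{R}^n$ is closed and convex; $f:\mathbb{R}^n\to\mathbb{R}$ is convex, differentiable, attains its minimum on $Q$, and $L>0$ satisfies $\|\nabla f(x)-\nabla f(y)\|_*\le L\|x-y\|$ for all $x,y\in Q$. A distance-generating function for $Q$ is $d_Q:Q\to\mathbb{R}_{\ge0}$ that is continuous on $Q$, strongly convex with modulus 1 w.r.t. $\|\cdot\|$ (i.e. $d_Q(\lambda x+(1-\lambda)y)+\frac{\lambda(1-\lambda)}2\|x-y\|^2\le\lambda d_Q(x)+(1-\lambda)d_Q(y)$ for $x,y\in Q$, $\lambda\in[0,1]$), and whose subdifferential admits a continuous selection $d_Q'$ on $Q^o:=\{x\in Q:\partial d_Q(x)\neq\emptyset\}$. For $z\in Q^o$, the Bregman distance is $V_z(x)=d_Q(x)-d_Q(z)-\langle d_Q'(z),x-z\rangle$, and the prox-mapping is $\mathrm{Prox}_{Q,z}(s)=\arg\min_{x\in Q}\{\langle s,x-z\rangle+V_z(x)\}$ (a unique minimizer, lying in $Q^o$). The $d_Q$-center is $c(d_Q)=\arg\min_{x\in Q}d_Q(x)$, and it is assumed that $d_Q(c(d_Q))=0$. Algorithm: choose $T\in\mathbb{N}_0$ and numbers $(\gamma_t)_{t=0}^{T+1}$ with $\gamma_0\in(0,1]$, $\gamma_t\ge0$ and $\gamma_t^2\le\Gamma_t:=\sum_{k=0}^t\gamma_k$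 for all $0\le t\le T+1$. Set $L_0=L$, $x_0=c(d_Q)$, $u_0=\arg\min_{x\in Q}\{\gamma_0(f(x_0)+\langle\nabla f(x_0),x-x_0\rangle)+L_0d_Q(x)\}$, $z_0=u_0$, $\tau_0=\gamma_1/\Gamma_1$, $x_1=\tau_0z_0+(1-\tau_0)u_0(=z_0)$, $\hat x_1=\mathrm{Prox}_{Q,z_0}(\gamma_1\nabla f(x_1)/L_0)$, $u_1=\tau_0\hat x_1+(1-\tau_0)u_0$. For $t=1,\dots,T$: choose $0<L_t\le L$ with $f(u_t)\le f(x_t)+\langle\nabla f(x_t),u_t-x_t\rangle+\frac{L_t}{2}\|u_t-x_t\|^2$; set $z_t=\arg\min_{x\in Q}\{\sum_{k=0}^t\gamma_k(f(x_k)+\langle\nabla f(x_k),x-x_k\rangle)+L_td_Q(x)\}$; set $\tau_t=\gamma_{t+1}/\Gamma_{t+1}$ and $x_{t+1}=\tau_tz_t+(1-\tau_t)u_t$; set $\hat x_{t+1}=\mathrm{Prox}_{Q,z_t}(\gamma_{t+1}\nabla f(x_{t+1})/L_t)$; set $u_{t+1}=\tau_t\hat x_{t+1}+(1-\tau_t)u_t$. *)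

(* Defs.v *)
From HB Require Import structures.
From mathcomp Require Import all_boot all_order all_algebra.
From mathcomp Require Import all_classical all_reals all_analysis.
Set Implicit Arguments. Unset Strict Implicit. Unset Printing Implicit Defensive.
Import Order.TTheory GRing.Theory Num.Theory.
Import numFieldNormedType.Exports.
Local Open Scope classical_set_scope.
Local Open Scope ring_scope.

Section Defs.
Variables (R : realType) (n : nat).
Local Notation V := 'rV[R]_n.

Definition sprod (u x : V) : R := \sum_(i < n) u ord0 i * x ord0 i.

Definition is_norm (N : V -> R) : Prop :=
  (forall x, 0 <= N x) /\ (forall x, N x = 0 -> x = 0) /\
  (forall (a : R) x, N (a *: x) = `|a| * N x) /\
  (forall x y, N (x + y) <= N x + N y).

Definition dual_norm (N : V -> R) (u : V) : R :=
  sup [set sprod u x | x in [set x | N x = 1]].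

Definition convex_fun (f : V -> R) : Prop :=
  forall x y (l : R), 0 <= l <= 1 ->
    f (l *: x + (1 - l) *: y) <= l * f x + (1 - l) * f y.

Definition is_gradient (f : V -> R) (g : V -> V) : Prop :=
  forall x, differentiable f x /\ forall v, 'd f x v = sprod (g x) v.

Definition strongly_convex1_on (N : V -> R) (Q : set V) (d : V -> R) : Prop :=
  forall x y (l : R), Q x -> Q y -> 0 <= l <= 1 ->
    d (l *: x + (1 - l) *: y) + l * (1 - l) / 2 * N (x - y) ^+ 2
      <= l * d x + (1 - l) * d y.

Definition subgrad (Q : set V) (d : V -> R) (x s : V) : Prop :=
  forall y, Q y -> d x + sprod s (y - x) <= d y.

Definition Qo (Q : set V) (d : V -> R) : set V :=
  [set x | Q x /\ exists s, subgrad Q d x s].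

Definition dgf (N : V -> R) (Q : set V) (d : V -> R) (d' : V -> V) : Prop :=
  (forall x, Q x -> 0 <= d x) /\
  {within Q, continuous d} /\
  strongly_convex1_on N Q d /\
  (forall x, Qo Q d x -> subgrad Q d x (d' x)) /\
  {within Qo Q d, continuous d'}.

Definition bregman (d : V -> R) (d' : V -> V) (z x : V) : R :=
  d x - d z - sprod (d' z) (x - z).

Definition is_argmin (Q : set V) (phi : V -> R) (p : V) : Prop :=
  Q p /\ forall x, Q x -> phi p <= phi x.

Definition is_prox (Q : set V) (d : V -> R) (d' : V -> V) (z s p : V) : Prop :=
  is_argmin Q (fun x => sprod s (x - z) + bregman d d' z x) p.

Definition Gam (gamma : nat -> R) (t : nat) : R := \sum_(k < t.+1) gamma k.

Definition model (f : V -> R) (g : V -> V) (d : V -> R) (gamma : nat -> R)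
  (xs : nat -> V) (Lt : nat -> R) (t : nat) (x : V) : R :=
  \sum_(k < t.+1) gamma k * (f (xs k) + sprod (g (xs k)) (x - xs k)) + Lt t * d x.

Definition psi (Q : set V) (f : V -> R) (g : V -> V) (d : V -> R) (gamma : nat -> R)
  (xs : nat -> V) (Lt : nat -> R) (t : nat) : R :=
  inf [set model f g d gamma xs Lt t x | x in Q].

End Defs.

(* Main.v *)
Require Import Defs.
From HB Require Import structures.
From mathcomp Require Import all_boot all_order all_algebra.
From mathcomp Require Import all_classical all_reals all_analysis.
From mathcomp Require Import ring lra.
Import Order.TTheory GRing.Theory Num.Theory.
Import numFieldNormedType.Exports.
Local Open Scope classical_set_scope.
Local Open Scope ring_scope.

Section S.
Variables (R : realType) (n : nat).
Local Notation V := 'rV[R]_n.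
Implicit Types u v w x y : V.

Lemma sprodDl u v x : sprod (u + v) x = sprod u x + sprod v x.
Proof. by rewrite /sprod -big_split /=; apply: eq_bigr => i _; rewrite mxE mulrDl. Qed.
Lemma sprodDr u x y : sprod u (x + y) = sprod u x + sprod u y.
Proof. by rewrite /sprod -big_split /=; apply: eq_bigr => i _; rewrite mxE mulrDr. Qed.
Lemma sprodZl a u x : sprod (a *: u) x = a * sprod u x.
Proof. by rewrite /sprod mulr_sumr; apply: eq_bigr => i _; rewrite mxE mulrA. Qed.
Lemma sprodZr a u x : sprod u (a *: x) = a * sprod u x.
Proof. by rewrite /sprod mulr_sumr; apply: eq_bigr => i _; rewrite mxE mulrCA. Qed.
Lemma sprodC u x : sprod u x = sprod x u.
Proof. by rewrite /sprod; apply: eq_bigr => i _; rewrite mulrC. Qed.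
Lemma sprodNl u x : sprod (- u) x = - sprod u x.
Proof. by rewrite -scaleN1r sprodZl mulN1r. Qed.
Lemma sprodNr u x : sprod u (- x) = - sprod u x.
Proof. by rewrite -scaleN1r sprodZr mulN1r. Qed.
Lemma sprodBl u v x : sprod (u - v) x = sprod u x - sprod v x.
Proof. by rewrite sprodDl sprodNl. Qed.
Lemma sprodBr u x y : sprod u (x - y) = sprod u x - sprod u y.
Proof. by rewrite sprodDr sprodNr. Qed.
Lemma sprod0r u : sprod u 0 = 0.
Proof. by rewrite -(scale0r (0:V)) sprodZr mul0r. Qed.
Lemma sprod0l u : sprod 0 u = 0.
Proof. by rewrite sprodC sprod0r. Qed.
Lemma sprod_suml I (r : seq I) (P : pred I) (F : I -> V) x :
  sprod (\sum_(i <- r | P i) F i) x = \sum_(i <- r | P i) sprod (F i) x.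
Proof.
elim/big_rec2: _ => [|i a b _ <-]; first by rewrite sprod0l.
by rewrite sprodDl.
Qed.
Lemma sprod_ge0 u : 0 <= sprod u u.
Proof. by apply: sumr_ge0 => i _; rewrite -expr2 sqr_ge0. Qed.

Lemma coord_le u (i : 'I_n) : `|u ord0 i| <= `|u|.
Proof.
rewrite [leRHS](_ : _ = mx_norm u) // mx_normrE; apply/bigmax_geP; right => /=.
by exists (ord0, i).
Qed.
Lemma core_lim (a b K : R) : 0 <= K ->
  (forall t, 0 < t <= 1 -> b - t * K <= a) -> b <= a.
Proof.
move=> K0 H; rewrite leNgt; apply/negP => ab.
have [K0'|Kp] := eqVneq K 0.
  by have := H 1; rewrite K0' mulr0 subr0 lexx ltr01 => /(_ isT); rewrite leNgt ab.
have Kp' : 0 < K by rewrite lt_def Kp K0.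
pose t := Num.min 1 ((b - a) / (2 * K)).
have t0 : 0 < t by rewrite lt_min ltr01 /= divr_gt0 ?subr_gt0 // mulr_gt0.
have t1 : t <= 1 by rewrite ge_min lexx.
have t2 : t <= (b - a) / (2 * K) by rewrite ge_min lexx orbT.
have := H t; rewrite t0 t1 => /(_ isT) h.
have : t * K <= (b - a) / 2.
  have -> : (b - a) / 2 = (b - a) / (2 * K) * K by field; rewrite gt_eqF.
  by rewrite ler_pM2r.
lra.
Qed.

Lemma convQ (Q : set V) : convex_set Q -> forall a b (l : R),
  Q a -> Q b -> 0 <= l <= 1 -> Q (l *: a + (1 - l) *: b).
Proof.
move=> cQ a b l Qa Qb /andP[l0 l1].
have := cQ a b (Itv01 l0 l1); rewrite !inE => /(_ Qa Qb).
by [].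
Qed.

Lemma sprod_bound u v : `|sprod u v| <= n%:R * `|u| * `|v|.
Proof.
rewrite /sprod (le_trans (ler_norm_sum _ _ _)) //.
rewrite -mulrA; apply: (le_trans (y := \sum_(i < n) (`|u| * `|v|))).
  by apply: ler_sum => i _; rewrite normrM ler_pM ?coord_le.
by rewrite sumr_const card_ord mulr_natl.
Qed.

Lemma sq_le_sprod (e : V) : `|e| ^+ 2 <= sprod e e.
Proof.
rewrite (_ : `|e| = mx_norm e) //.
have [->|] := eqVneq (mx_norm e) 0; first by rewrite expr0n /= sprod_ge0.
move=> /mx_norm_neq0[[i j] /= ->].
rewrite (ord1 i) /sprod (bigD1 j) //= -[leLHS]addr0 real_normK ?num_real //.
by rewrite expr2 lerD2l sumr_ge0 // => k _; rewrite -expr2 sqr_ge0.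
Qed.
Lemma qgrowth (Q : set V) (N F : V -> R) (c : R) p :
  0 <= c -> Q p -> (forall w, Q w -> F p <= F w) ->
  (forall x l, Q x -> 0 <= l <= 1 ->
     F (l *: x + (1 - l) *: p) + c * (l * (1 - l) / 2 * N (x - p) ^+ 2)
       <= l * F x + (1 - l) * F p) ->
  (forall x l, Q x -> 0 <= l <= 1 -> Q (l *: x + (1 - l) *: p)) ->
  forall x, Q x -> F p + c / 2 * N (x - p) ^+ 2 <= F x.
Proof.
move=> c0 Qp pmin H cQ x Qx.
have M0 : 0 <= c / 2 * N (x - p) ^+ 2 by rewrite mulr_ge0 ?divr_ge0 ?sqr_ge0.
apply: (@core_lim _ _ _ M0) => t /andP[t0 t1].
have t01 : 0 <= t <= 1 by rewrite ltW.
have h1 := H x t Qx t01.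
have h2 := pmin _ (cQ x t Qx t01).
set A := F x in h1 *; set B := F p in h1 h2 *; set M := N (x - p) ^+ 2 in h1 M0 *.
set W := F _ in h1 h2.
have : 0 <= t * (A - B - (1 - t) * (c / 2 * M)).
  rewrite -subr_ge0 in h1; rewrite -subr_ge0 in h2.
  have -> : t * (A - B - (1 - t) * (c / 2 * M)) =
     (t * A + (1 - t) * B - (W + c * (t * (1 - t) / 2 * M))) + (W - B) by ring.
  by rewrite addr_ge0.
rewrite pmulr_rge0 //; lra.
Qed.

Lemma sc_aff (Q : set V) (N d A : V -> R) (c : R) :
  strongly_convex1_on N Q d -> 0 <= c ->
  (forall x y l, A (l *: x + (1 - l) *: y) = l * A x + (1 - l) * A y) ->
  forall p x l, Q x -> Q p -> 0 <= l <= 1 ->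
  (A (l *: x + (1 - l) *: p) + c * d (l *: x + (1 - l) *: p))
    + c * (l * (1 - l) / 2 * N (x - p) ^+ 2)
  <= l * (A x + c * d x) + (1 - l) * (A p + c * d p).
Proof.
move=> sc c0 Aff p x l Qx Qp l01; rewrite Aff.
have := sc x p l Qx Qp l01.
set D := d _ => h.
have : c * (D + l * (1 - l) / 2 * N (x - p) ^+ 2) <= c * (l * d x + (1 - l) * d p).
  by rewrite ler_wpM2l.
move=> h2; rewrite -subr_ge0; rewrite -subr_ge0 in h2.
by rewrite (_ : _ - _ = c * (l * d x + (1 - l) * d p) - c * (D + l * (1 - l) / 2 * N (x - p) ^+ 2)) //; ring.
Qed.

Lemma norm_sum_le {N : V -> R} : is_norm N ->
  forall I (r : seq I) (P : pred I) (F : I -> V),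
  N (\sum_(i <- r | P i) F i) <= \sum_(i <- r | P i) N (F i).
Proof.
move=> [N0 [Nd [NZ Ntr]]] I r P F.
elim/big_rec2: _ => [|i a b _ h].
  by have := NZ 0 0; rewrite scale0r normr0 mul0r => ->.
by rewrite (le_trans (Ntr _ _)) // lerD2l.
Qed.

Lemma norm_le_K {N : V -> R} : is_norm N ->
  exists2 K, 0 <= K & forall v, N v <= K * `|v|.
Proof.
move=> hN; have [N0 [Nd [NZ Ntr]]] := hN.
exists (\sum_(j < n) N 'e_j); first by apply: sumr_ge0.
move=> v; rewrite {1}(row_sum_delta v) (le_trans (norm_sum_le hN _ _ _ _)) //.
rewrite mulr_suml; apply: ler_sum => j _; rewrite NZ mulrC ler_wpM2l //.
by rewrite coord_le.
Qed.

Lemma norm_Lip {N : V -> R} : is_norm N -> forall x y, `|N x - N y| <= N (x - y).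
Proof.
move=> hN; have [N0 [Nd [NZ Ntr]]] := hN => x y.
have Nsym : forall a b, N (a - b) = N (b - a).
  by move=> a b; rewrite -opprB -scaleN1r NZ normrN normr1 mul1r.
rewrite ler_norml; apply/andP; split.
- have := Ntr (y - x) x; rewrite subrK Nsym; lra.
- have := Ntr (x - y) y; rewrite subrK; lra.
Qed.

Lemma norm_cont {N : V -> R} : is_norm N -> continuous N.
Proof.
move=> hN x; have [K K0 HK] := norm_le_K hN.
have FF : Filter (nbhs (x : V)) by exact: nbhs_filter.
rewrite /continuous_at.
apply/(@cvgrPdist_lt _ _ _ (nbhs (x : V)) FF) => eps eps0.
have r0 : 0 < eps / (K + 1) by rewrite divr_gt0 // ltr_wpDl.
have H : \forall t \near x, `|x - t| < eps / (K + 1).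
  exact: (@cvgr_dist_lt _ _ _ (nbhs x) _ id x cvg_id _ r0).
apply: filterS H => t xt; rewrite (le_lt_trans (norm_Lip hN _ _)) // (le_lt_trans (HK _)) //.
have K1 : 0 < K + 1 by rewrite ltr_wpDl.
rewrite (@le_lt_trans _ _ ((K + 1) * `|x - t|)) //.
  by rewrite ler_wpM2r // lerDl.
by rewrite -ltr_pdivlMl // mulrC.
Qed.
Lemma norm_equiv {N : V -> R} : is_norm N ->
  exists2 M, 0 < M & forall x, `|x| <= M * N x.
Proof.
move=> hN; have [N0 [Nd [NZ Ntr]]] := hN.
pose S := [set x : V | `|x| = 1].
have scale1 : forall x : V, x != 0 -> S (`|x|^-1 *: x).
  move=> x x0; rewrite /S /= normrZ normfV normr_id mulVf //.
  by rewrite normr_eq0.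
have [Sempty|/set0P[c0 Sc0]] := eqVneq S set0; last first.
- have cS : compact S.
    apply: bounded_closed_compact.
      exists 1; split; first exact: num_real.
      by move=> M M1 x /= ->; rewrite ltW.
    apply: (@preimage_closed _ _ (fun x : V => `|x|) [set 1]).
      by move=> x _; exact: norm_continuous.
    by apply: closed_eq.
  have [c cS' cmin] := @compact_EVT_min _ _ N S (ex_intro _ c0 Sc0) cS
    (continuous_subspaceT (norm_cont hN)).
  have Sc : S c by rewrite inE in cS'.
  have Nc : 0 < N c.
    rewrite lt_def N0 andbT; apply/eqP => /Nd c0'.
    by move: Sc; rewrite /S /= c0' normr0 => /eqP; rewrite eq_sym oner_eq0.
  exists (N c)^-1; first by rewrite invr_gt0.
  move=> x; have [->|x0] := eqVneq x 0; first by rewrite normr0 mulr_ge0 ?invr_ge0 ?N0.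
  have := cmin _ (mem_set (scale1 x x0)); rewrite NZ normfV normr_id.
  have nx : 0 < `|x| by rewrite normr_gt0.
  move=> h; rewrite -(ler_pM2l nx) mulrA mulfV ?gt_eqF // mul1r in h.
  by rewrite -(ler_pM2l Nc) mulrA mulfV ?gt_eqF // mul1r mulrC.
- exists 1 => // x; rewrite mul1r.
  have [->|x0] := eqVneq x 0; first by rewrite normr0 N0.
  by have := scale1 x x0; rewrite Sempty.
Qed.

Lemma dual_le {N : V -> R} : is_norm N ->
  forall u v, sprod u v <= dual_norm N u * N v.
Proof.
move=> hN; have [N0 [Nd [NZ Ntr]]] := hN.
have [M M0 HM] := norm_equiv hN.
move=> u v.
have [Nv0|Nv] := eqVneq (N v) 0.
  by rewrite Nv0 mulr0 (Nd _ Nv0) sprod0r.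
have Nvp : 0 < N v by rewrite lt_def Nv N0.
set E := [set sprod u x | x in [set x | N x = 1]].
have Ex : E (sprod u ((N v)^-1 *: v)).
  exists ((N v)^-1 *: v) => //=.
  by rewrite NZ ger0_norm ?invr_ge0 ?N0 // mulVf.
have hub : has_ubound E.
  exists (n%:R * `|u| * M) => y [x /= Nx <-].
  rewrite (le_trans (ler_norm _)) // (le_trans (sprod_bound _ _)) //.
  by rewrite ler_wpM2l ?mulr_ge0 // (le_trans (HM x)) // Nx mulr1.
have := ub_le_sup hub Ex; rewrite sprodZr => h.
have -> : sprod u v = N v * ((N v)^-1 * sprod u v) by rewrite mulrA mulfV ?gt_eqF // mul1r.
by rewrite mulrC ler_wpM2r // ltW.
Qed.
Lemma grad_ineq (f : V -> R) (g : V -> V) : convex_fun f -> is_gradient f g ->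
  forall x y, f x + sprod (g x) (y - x) <= f y.
Proof.
move=> cf hg x y; have [df dg] := hg x.
set v := y - x.
have dv : derivable f x v by exact: diff_derivable.
have Dv : 'D_v f x = sprod (g x) v by rewrite deriveE // dg.
pose q := fun h : R => h^-1 *: ((f \o shift x) (h *: v) - f x).
have cq : q @ 0^' --> 'D_v f x by exact: dv.
have cqr : q @ 0^'+ --> 'D_v f x.
  move=> A /cq /nbhs_ballP [_ /posnumP[e] xe_A].
  rewrite /= /at_right /within /=; apply/nbhs_ballP; exists e%:num => //= z xe_z z0.
  by apply: xe_A => //; rewrite gt_eqF.
have : 'D_v f x <= f y - f x.
  rewrite -(cvg_lim _ cqr) //.
  apply: limr_le; first by apply/cvg_ex; exists ('D_v f x).
  near=> h.
  have h0 : 0 < h by near: h; exact: nbhs_right_gt.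
  have h1 : h <= 1 by near: h; exact: nbhs_right_le.
  rewrite /q /= /GRing.scale /=.
  have := cf y x h; rewrite h1 ltW //= => /(_ isT).
  have -> : h *: y + (1 - h) *: x = h *: v + x.
    by rewrite /v scalerBr scalerBl scale1r addrCA addrC.
  move=> hc.
  rewrite (_ : scalemx h v = h *: v) //.
  rewrite -(ler_pM2l h0) mulrA mulfV ?gt_eqF // mul1r; nra.
by rewrite Dv; lra.
Unshelve. all: by end_near. Qed.
Lemma nat_lim (a b K : R) : 0 <= K -> (forall m : nat, a <= b + K / m.+1%:R) -> a <= b.
Proof.
move=> K0 H; apply/ler_addgt0Pr => e e0.
pose m := Num.Def.archi_bound (K / e).
have hm := archi_boundP (divr_ge0 K0 (ltW e0)).
apply: (le_trans (H m)); rewrite lerD2l.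
have m0 : 0 < m.+1%:R :> R by rewrite ltr0Sn.
rewrite (ler_pdivrMr _ _ m0).
have hK : K = (K / e) * e by rewrite divfK ?gt_eqF.
have hA : (Num.Def.archi_bound (K / e))%:R <= m.+1%:R :> R by rewrite ler_nat.
rewrite hK; move: hm hA; rewrite -/m; set q := K / e; nra.
Qed.

Lemma descent (f : V -> R) (g : V -> V) (N : V -> R) (Q : set V) (L : R) :
  is_norm N -> convex_set Q -> convex_fun f -> is_gradient f g ->
  (forall x y, Q x -> Q y -> dual_norm N (g x - g y) <= L * N (x - y)) ->
  0 <= L ->
  forall x y, Q x -> Q y -> f y <= f x + sprod (g x) (y - x) + L / 2 * N (y - x) ^+ 2.
Proof.
move=> hN cQ cf hg Lip L0 x y Qx Qy.
have [N0 [Nd [NZ Ntr]]] := hN.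
set v := y - x; set S := sprod (g x) v; set M := N v ^+ 2.
have M0 : 0 <= M by rewrite sqr_ge0.
apply: (@nat_lim _ _ (L * M / 2)); first by rewrite divr_ge0 ?mulr_ge0.
move=> m; set r := m.+1%:R.
have r0 : 0 < r by rewrite ltr0Sn.
pose p (k : nat) := x + (k%:R / r) *: v.
have pQ : forall k, (k <= m.+1)%N -> Q (p k).
  move=> k km; have -> : p k = (k%:R / r) *: y + (1 - k%:R / r) *: x.
    by rewrite /p /v scalerBr scalerBl scale1r addrCA addrC.
  apply: convQ => //; apply/andP; split; first by rewrite divr_ge0 // ltW.
  by rewrite (ler_pdivrMr _ _ r0) mul1r ler_nat.
have C : forall k, (k <= m.+1)%N ->
    f (p k) - f x <= k%:R / r * S + L * M * (k%:R * (k%:R + 1)) / (2 * r ^+ 2).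
  elim=> [|k IH] km.
    have -> : p 0%N = x by rewrite /p mul0r scale0r addr0.
    by rewrite subrr (_ : 0%:R = 0 :> R) // !mul0r mulr0 mul0r addr0.
  have IH' := IH (ltnW km).
  have gi := @grad_ineq f g cf hg (p k.+1) (p k).
  have d1 : p k - p k.+1 = - (r^-1 *: v).
    rewrite /p opprD addrACA subrr add0r -scalerBl.
    rewrite (_ : k%:R / r - k.+1%:R / r = - r^-1) ?scaleNr //.
    by rewrite -natr1; field; rewrite gt_eqF.
  rewrite d1 sprodNr sprodZr in gi.
  have lip := Lip _ _ (pQ _ km) Qx.
  have dl := dual_le hN (g (p k.+1) - g x) v.
  have e1 : p k.+1 - x = (k.+1%:R / r) *: v by rewrite /p addrAC subrr add0r.
  rewrite e1 NZ ger0_norm in lip; last by rewrite divr_ge0 // ltW.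
  rewrite sprodBl -/S in dl.
  have NvM : N v * N v = M by rewrite /M expr2.
  have key : sprod (g (p k.+1)) v <= S + L * (k.+1%:R / r) * M.
    have : dual_norm N (g (p k.+1) - g x) * N v <= L * (k.+1%:R / r * N v) * N v.
      by rewrite ler_wpM2r // N0.
    move=> hh; have : L * (k.+1%:R / r * N v) * N v = L * (k.+1%:R / r) * M.
      by rewrite -NvM; ring.
    move=> e; rewrite e in hh; move: dl hh.
    set D := dual_norm _ _; set A := sprod _ _; set B := L * _ * M. lra.
  have rr : r ^+ 2 = r * r by rewrite expr2.
  set A := sprod (g (p k.+1)) v in gi key.
  rewrite -natr1.
  have e3 : k.+1%:R / r * S + L * M * ((k%:R + 1) * ((k%:R + 1) + 1)) / (2 * r ^+ 2)
    = (k%:R / r * S + L * M * (k%:R * (k%:R + 1)) / (2 * r ^+ 2))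
      + r^-1 * (S + L * (k.+1%:R / r) * M).
    by rewrite -natr1; field; rewrite addrC natr1 pnatr_eq0.
  rewrite -natr1 in e3; rewrite e3.
  have : r^-1 * A <= r^-1 * (S + L * (k.+1%:R / r) * M) by rewrite ler_wpM2l // invr_ge0 ltW.
  rewrite -natr1; move: IH' gi.
  set X1 := r^-1 * A; set X2 := r^-1 * (S + _); set X3 := k%:R / r * S + _.
  lra.
have := C m.+1 (leqnn _).
have -> : p m.+1 = y by rewrite /p divff ?gt_eqF // scale1r /v addrC subrK.
have -> : m.+1%:R / r = 1 by rewrite divff ?gt_eqF.
move=> h.
have e4 : L * M * (r * (r + 1)) / (2 * r ^+ 2) = L / 2 * M + L * M / 2 / r.
  by field; rewrite gt_eqF.
rewrite -/r e4 mul1r in h; move: h.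
set Z1 := L / 2 * M; set Z2 := L * M / 2 / r; lra.
Qed.
Lemma cont_within_at (A : set V) (F : V -> V) : {within A, continuous F} ->
  forall z, A z -> forall eps, 0 < eps ->
  exists2 eta, 0 < eta & forall x, A x -> `|z - x| < eta -> `|F z - F x| < eps.
Proof.
move=> hc z Az eps e0.
have h : F @ within A (nbhs z) --> F z.
  rewrite nbhs_subspace_in //; exact: (hc z).
move/cvgrPdist_lt : h => /(_ eps e0); rewrite near_withinE => /nbhs_ballP[eta eta0 H].
exists eta => // x Ax zx; apply: H => //.
by rewrite mx_norm_ball /ball_ /=.
Qed.

Lemma cont_sum_seq (I : Type) (r : seq I) (F : I -> V -> R) :
  (forall i, continuous (F i)) -> continuous (fun x => \sum_(i <- r) F i x).
Proof.
move=> hF; elim: r => [|i r IH].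
  by under eq_fun do rewrite big_nil; exact: cst_continuous.
under eq_fun do rewrite big_cons.
by move=> x; apply: continuousD; [exact: hF | exact: IH].
Qed.

Lemma cont_sq (w : V) : continuous (fun x => sprod (x - w) (x - w)).
Proof.
rewrite /sprod; apply: cont_sum_seq => i x.
have c : {for x, continuous (fun y : V => (y - w) ord0 i)}.
  have -> : (fun y : V => (y - w) ord0 i) = (fun y : V => y ord0 i - w ord0 i).
    by apply: funext => y; rewrite !mxE.
  apply: continuousB; [exact: coord_continuous | exact: cst_continuous].
exact: continuousM.
Qed.
Lemma cont_csq (c : R) (w : V) : continuous (fun x : V => c * sprod (x - w) (x - w)).
Proof.
move=> x.
have h1 : {for x, continuous (fun=> c : R)} by apply: cst_continuous.
have h2 := cont_sq w x.
exact: (continuousM h1 h2).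
Qed.
Lemma sprod_expand (a h : V) (t : R) :
  sprod (a + t *: h) (a + t *: h) = sprod a a + 2 * t * sprod a h + t ^+ 2 * sprod h h.
Proof.
rewrite !sprodDl !sprodDr !sprodZl !sprodZr (sprodC h a); ring.
Qed.

Lemma moreau (N : V -> R) (Q : set V) (d : V -> R) :
  closed Q -> convex_set Q -> (forall x, Q x -> 0 <= d x) ->
  {within Q, continuous d} -> strongly_convex1_on N Q d ->
  forall w lam, Q w -> 0 < lam ->
  exists x, [/\ Q x, sprod (x - w) (x - w) <= 2 * lam * d w
             & subgrad Q d x (lam^-1 *: (w - x))].
Proof.
move=> clQ cQ d0 cd sc w lam Qw lam0.
pose G x := d x + (2 * lam)^-1 * sprod (x - w) (x - w).
pose rho := 1 + 2 * lam * d w.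
have rho1 : 1 <= rho by rewrite lerDl mulr_ge0 ?d0 // mulr_ge0 // ltW.
pose A := Q `&` [set x | `|w - x| <= rho].
have AQ : A `<=` Q by move=> x [].
have clA : closed A.
  apply: closedI => //.
  have -> : [set x | `|w - x| <= rho] = closed_ball w rho.
    by rewrite closed_ballE // (lt_le_trans ltr01).
  exact: closed_ball_closed.
have cA : compact A.
  apply: bounded_closed_compact => //.
  exists (`|w| + rho); split; first exact: num_real.
  move=> M hM x [_ /= wx]; apply: (le_trans _ (ltW hM)).
  have -> : x = w - (w - x) by rewrite opprB addrC subrK.
  by rewrite (le_trans (ler_normB _ _)) // lerD2l.
have A0 : A !=set0 by exists w; split => //=; rewrite subrr normr0 (le_trans ler01).
have cG : {within A, continuous G}.
  have c1 : {within A, continuous d} := continuous_subspaceW AQ cd.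
  have c2 : {within A, continuous (fun x => (2 * lam)^-1 * sprod (x - w) (x - w))}.
    by apply: continuous_subspaceT; exact: cont_csq.
  move=> x; rewrite /continuous_at /G; apply: cvgD; [exact: c1 | exact: c2].
have [c /set_mem Ac cmin] := compact_EVT_min A0 cA cG.
have Qc := AQ c Ac.
have il0 : 0 < (2 * lam)^-1 by rewrite invr_gt0 mulr_gt0.
have Gw : G w = d w by rewrite /G subrr sprod0l mulr0 addr0.
have Aw : A w by split => //=; rewrite subrr normr0 (le_trans ler01).
have GcGw : G c <= G w by apply: cmin; rewrite inE.
have cminQ : forall x, Q x -> G c <= G x.
  move=> x Qx; have [wx|wx] := leP `|w - x| rho.
    by apply: cmin; rewrite inE.
  apply: (le_trans GcGw); rewrite Gw /G.
  have h1 := sq_le_sprod (x - w).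
  have h2 : rho < `|x - w| by rewrite distrC.
  have h3 : rho <= rho ^+ 2 by rewrite expr2 ler_peMl // (le_trans ler01).
  have h4 : rho ^+ 2 < `|x - w| ^+ 2.
    by rewrite !expr2; nra.
  have h5 : 2 * lam * d w < sprod (x - w) (x - w).
    rewrite /rho in h3 h4; lra.
  have : d w < (2 * lam)^-1 * sprod (x - w) (x - w).
    by rewrite -(ltr_pM2l (mulr_gt0 (ltr0Sn _ 1) lam0)) mulrA mulfV ?gt_eqF ?mulr_gt0 // mul1r.
  have := d0 x Qx; lra.
exists c; split => //.
  have : (2 * lam)^-1 * sprod (c - w) (c - w) <= d w.
    by have := d0 c Qc; move: GcGw; rewrite Gw /G; lra.
  have e : (2 * lam)^-1 * (2 * lam * d w) = d w by field; rewrite gt_eqF.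
  by move=> hh; rewrite -(ler_pM2l il0) e.
move=> y Qy.
set h := y - c.
have K0 : 0 <= (2 * lam)^-1 * sprod h h by rewrite mulr_ge0 ?sprod_ge0 // ltW.
apply: (@core_lim _ _ _ K0) => t /andP[t0 t1].
have t01 : 0 <= t <= 1 by rewrite ltW.
have xt : t *: y + (1 - t) *: c = (c - w) + t *: h + w.
  by apply/rowP => i; rewrite /h !mxE; ring.
have Qxt := @convQ Q cQ _ _ _ Qy Qc t01.
have Gle := cminQ _ Qxt.
have dle : d (t *: y + (1 - t) *: c) <= t * d y + (1 - t) * d c.
  have := sc y c t Qy Qc t01.
  have : 0 <= t * (1 - t) / 2 * N (y - c) ^+ 2.
    have tt : 0 <= t * (1 - t) by rewrite mulr_ge0 ?subr_ge0 // ltW.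
    by rewrite mulr_ge0 ?sqr_ge0 // divr_ge0.
  lra.
rewrite /G in Gle.
rewrite (_ : t *: y + (1 - t) *: c - w = (c - w) + t *: h) in Gle; last first.
  by rewrite xt addrK.
rewrite sprod_expand in Gle.
have -> : sprod (lam^-1 *: (w - c)) h = - (lam^-1 * sprod (c - w) h).
  by rewrite sprodZl -opprB sprodNl; ring.
set s1 := sprod (c - w) h in Gle *; set s2 := sprod h h in Gle K0 *.
set s0 := sprod (c - w) (c - w) in Gle.
set D := d (t *: y + (1 - t) *: c) in Gle dle.
have : 0 <= t * (d y - d c + lam^-1 * s1 + t * ((2 * lam)^-1 * s2)).
  have -> : t * (d y - d c + lam^-1 * s1 + t * ((2 * lam)^-1 * s2)) =
    (t * d y + (1 - t) * d c - D) + ((D + (2 * lam)^-1 * (s0 + 2 * t * s1 + t ^+ 2 * s2))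
       - (d c + (2 * lam)^-1 * s0)).
    by field; rewrite gt_eqF.
  by apply: addr_ge0; rewrite subr_ge0.
rewrite pmulr_rge0 //; lra.
Qed.
Lemma opt_sel (N : V -> R) (Q : set V) (d : V -> R) (d' : V -> V) :
  closed Q -> convex_set Q -> dgf N Q d d' ->
  forall z s1, Q z -> subgrad Q d z s1 -> forall y, Q y -> 0 <= sprod (d' z - s1) (y - z).
Proof.
move=> clQ cQ [d0 [cd [sc [sel cd']]]] z s1 Qz sz y Qy.
have Qoz : Qo Q d z by split => //; exists s1.
rewrite leNgt; apply/negP => aneg.
set a := sprod (d' z - s1) (y - z) in aneg.
pose delta := - a.
have dp : 0 < delta by rewrite oppr_gt0.
pose Cn : R := n%:R.
have Cn0 : 0 <= Cn by rewrite ler0n.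
pose Yz := `|y - z|.
have Yz0 : 0 <= Yz by rewrite normr_ge0.
pose Bz := `|d' z - s1|.
have Bz0 : 0 <= Bz by rewrite normr_ge0.
pose D := d z + d y.
have D0 : 0 <= D by rewrite addr_ge0 ?d0.
pose eps := delta / (4 * (Cn * Yz + 1)).
have CY1 : 0 < Cn * Yz + 1 by rewrite ltr_wpDl ?mulr_ge0.
have eps0 : 0 < eps by rewrite divr_gt0 // mulr_gt0.
have [eta eta0 Heta] := @cont_within_at _ _ cd' z Qoz _ eps0.
pose K1 := Cn * (eps + Bz).
have K10 : 0 <= K1 by rewrite mulr_ge0 // addr_ge0 // ltW.
pose P := 32 * K1 ^+ 2 * D.
have P0 : 0 <= P by rewrite mulr_ge0 // mulr_ge0 // sqr_ge0.
pose A1 := eta / (2 * (Yz + 1)).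
pose A2 := eta ^+ 2 / (16 * (D + 1)).
pose A3 := 9 * delta ^+ 2 / (2 * (P + 1)).
have Y1 : 0 < Yz + 1 by rewrite ltr_wpDl.
have D1 : 0 < D + 1 by rewrite ltr_wpDl.
have P1 : 0 < P + 1 by rewrite ltr_wpDl.
have A10 : 0 < A1 by rewrite divr_gt0 // mulr_gt0.
have A20 : 0 < A2 by rewrite divr_gt0 ?exprn_gt0 // mulr_gt0.
have A30 : 0 < A3 by rewrite divr_gt0 ?mulr_gt0 ?exprn_gt0.
pose s := Num.min 1 (Num.min A1 (Num.min A2 A3)).
have s0 : 0 < s by rewrite !lt_min ltr01 A10 A20 A30.
have s1' : s <= 1 by rewrite ge_min lexx.
have sA1 : s <= A1 by rewrite /s !ge_min lexx !orbT.
have sA2 : s <= A2 by rewrite /s !ge_min lexx !orbT.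
have sA3 : s <= A3 by rewrite /s !ge_min lexx !orbT.
have s01 : 0 <= s <= 1 by rewrite ltW.
pose w := s *: y + (1 - s) *: z.
have Qw : Q w := @convQ Q cQ _ _ _ Qy Qz s01.
have s30 : 0 < s ^+ 3 by rewrite exprn_gt0.
have [x [Qx hx sgx]] := @moreau N Q d clQ cQ d0 cd sc w _ Qw s30.
have dw : d w <= D.
  have := sc y z s Qy Qz s01.
  have : 0 <= s * (1 - s) / 2 * N (y - z) ^+ 2.
    have tt : 0 <= s * (1 - s) by rewrite mulr_ge0 ?subr_ge0 // ltW.
    by rewrite mulr_ge0 ?sqr_ge0 // divr_ge0.
  have := d0 y Qy; have := d0 z Qz; rewrite /D /w; nra.
have Qox : Qo Q d x by split => //; exists ((s ^+ 3)^-1 *: (w - x)).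
have sgx' := sel x Qox.
pose e := x - w.
have he : `|e| ^+ 2 <= 2 * s ^+ 3 * D.
  apply: (le_trans (sq_le_sprod e)); apply: (le_trans hx).
  by rewrite ler_wpM2l // mulr_ge0 // ltW.
have xz : x - z = s *: (y - z) + e.
  by apply/rowP => i; rewrite /e /w !mxE; ring.
have hs3 : s ^+ 3 <= s.
  by rewrite -[leRHS]expr1 ler_wiXn2l // ltW.
have ne : `|e| < eta / 2.
  have : `|e| ^+ 2 < eta ^+ 2 / 4.
    apply: (le_lt_trans he).
    have : 2 * s ^+ 3 * D <= 2 * s * D by rewrite ler_wpM2r // ler_wpM2l.
    have : s * (16 * (D + 1)) <= eta ^+ 2.
      by rewrite -ler_pdivlMr ?mulr_gt0.
    move=> h1 h2; rewrite /A2 in sA2; nra.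
  have := normr_ge0 e; nra.
have nsy : s * Yz < eta / 2.
  have : s * (2 * (Yz + 1)) <= eta by rewrite -ler_pdivlMr ?mulr_gt0.
  nra.
have zx : `|z - x| < eta.
  rewrite distrC xz (le_lt_trans (ler_normD _ _)) // normrZ ger0_norm ?ltW //.
  rewrite -/Yz; lra.
have hc := Heta x Qox zx.
have mono : 0 <= sprod (d' x - s1) (x - z).
  have h1 := sgx' z Qz; have h2 := sz x Qx.
  rewrite sprodBl; rewrite -opprB sprodNr in h1; lra.
rewrite xz sprodDr sprodZr in mono.
have P1' : sprod (d' x - s1) (y - z) <= - delta + delta / 4.
  have -> : d' x - s1 = (d' z - s1) + (d' x - d' z).
    by apply/rowP => i; rewrite !mxE; ring.
  rewrite sprodDl -/a.
  have := ler_norm (sprod (d' x - d' z) (y - z)).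
  have := sprod_bound (d' x - d' z) (y - z).
  rewrite distrC in hc.
  have : Cn * `|d' x - d' z| * `|y - z| <= Cn * eps * Yz.
    by rewrite ler_wpM2r // ler_wpM2l // ltW.
  have : Cn * eps * Yz <= delta / 4.
    have -> : delta / 4 = eps * (Cn * Yz + 1) by rewrite /eps; field; rewrite gt_eqF.
    nra.
  rewrite /delta; lra.
have P2' : sprod (d' x - s1) e <= K1 * `|e|.
  apply: (le_trans (ler_norm _)); apply: (le_trans (sprod_bound _ _)).
  rewrite /K1 ler_wpM2r // ler_wpM2l //.
  have -> : d' x - s1 = (d' x - d' z) + (d' z - s1).
    by apply/rowP => i; rewrite !mxE; ring.
  rewrite (le_trans (ler_normD _ _)) // lerD2r -/Bz distrC ltW //.
have k1 : 3 * delta * s / 4 <= K1 * `|e|.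
  have : s * sprod (d' x - s1) (y - z) <= s * (- delta + delta / 4).
    by rewrite ler_wpM2l // ltW.
  lra.
have k2 : (3 * delta * s / 4) ^+ 2 <= (K1 * `|e|) ^+ 2.
  have a0 : 0 <= 3 * delta * s / 4.
    apply: divr_ge0; last by [].
    by apply: mulr_ge0; [apply: mulr_ge0 => //; exact: ltW | exact: ltW].
  move: a0 k1; set u := 3 * delta * s / 4; set v := K1 * `|e|.
  rewrite !expr2; nra.
have k3 : (K1 * `|e|) ^+ 2 <= K1 ^+ 2 * (2 * s ^+ 3 * D).
  by rewrite exprMn ler_wpM2l // sqr_ge0.
have k4 : 9 * delta ^+ 2 <= s * P.
  have : (3 * delta * s / 4) ^+ 2 <= K1 ^+ 2 * (2 * s ^+ 3 * D) := le_trans k2 k3.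
  have -> : (3 * delta * s / 4) ^+ 2 = s ^+ 2 * (9 * delta ^+ 2 / 16) by field.
  have -> : K1 ^+ 2 * (2 * s ^+ 3 * D) = s ^+ 2 * (s * P / 16) by rewrite /P; field.
  rewrite ler_pM2l ?exprn_gt0 // => h.
  have : 9 * delta ^+ 2 / 16 * 16 <= s * P / 16 * 16 by rewrite ler_wpM2r.
  by rewrite !divfK.
have : s * (2 * (P + 1)) <= 9 * delta ^+ 2 by rewrite -ler_pdivlMr ?mulr_gt0.
have := exprn_gt0 2 dp.
nra.
Qed.
Lemma model_step (f : V -> R) (g : V -> V) (d : V -> R) (gamma : nat -> R)
  (xs : nat -> V) (Lt : nat -> R) t y :
  model f g d gamma xs Lt t.+1 y = model f g d gamma xs Lt t y
    + gamma t.+1 * (f (xs t.+1) + sprod (g (xs t.+1)) (y - xs t.+1))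
    + (Lt t.+1 - Lt t) * d y.
Proof. rewrite /model big_ord_recr /=; set S := \sum_(_ < _) _; ring. Qed.

Lemma model_diff (f : V -> R) (g : V -> V) (d : V -> R) (gamma : nat -> R)
  (xs : nat -> V) (Lt : nat -> R) t y z :
  model f g d gamma xs Lt t y - model f g d gamma xs Lt t z =
  sprod (\sum_(k < t.+1) gamma k *: g (xs k)) (y - z) + Lt t * (d y - d z).
Proof.
rewrite /model sprod_suml.
have -> : forall a b c e : R, a + b - (c + e) = (a - c) + (b - e) by move=> *; ring.
rewrite -sumrB; congr (_ + _); last by ring.
apply: eq_bigr => k _.
rewrite sprodZl (_ : y - z = (y - xs k) - (z - xs k)); last first.
  by apply/rowP => i; rewrite !mxE; ring.
rewrite (sprodBr (g (xs k)) (y - xs k) (z - xs k)); ring.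
Qed.

Lemma psi_min (Q : set V) (F : V -> R) p : is_argmin Q F p ->
  inf [set F x | x in Q] = F p.
Proof.
move=> [Qp pmin]; apply/le_anti/andP; split.
  apply: ge_inf; last by exists p.
  by exists (F p) => _ [x Qx <-]; exact: pmin.
by apply: lb_le_inf; [exists (F p), p | move=> _ [x Qx <-]; exact: pmin].
Qed.

Lemma breg_lb (N : V -> R) (Q : set V) (d : V -> R) (d' : V -> V) :
  convex_set Q -> strongly_convex1_on N Q d ->
  forall z, Q z -> subgrad Q d z (d' z) ->
  forall x, Q x -> 2^-1 * N (x - z) ^+ 2 <= bregman d d' z x.
Proof.
move=> cQ sc z Qz sgz x Qx.
pose A := fun y : V => - sprod (d' z) y.
have Aff : forall x y l, A (l *: x + (1 - l) *: y) = l * A x + (1 - l) * A y.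
  by move=> a b l; rewrite /A sprodDr !sprodZr; ring.
pose F := fun y => A y + 1 * d y.
have := @qgrowth Q N F 1 z ler01 Qz.
have Fmin : forall w, Q w -> F z <= F w.
  move=> w Qw; have := sgz w Qw; rewrite /F /A sprodBr; lra.
move=> /(_ Fmin) /(_ (fun x l Qx l01 => @sc_aff Q N d A 1 sc ler01 Aff z x l Qx Qz l01)).
move=> /(_ (fun x l Qx l01 => @convQ Q cQ _ _ _ Qx Qz l01)) /(_ x Qx).
rewrite /F /A /bregman sprodBr; lra.
Qed.

Lemma key_ineq (N : V -> R) (Q : set V) (d : V -> R) (d' : V -> V) (phi : V -> R) :
  closed Q -> convex_set Q -> dgf N Q d d' ->
  forall (ell : V) (L : R) z, 0 < L ->
  (forall y, phi y - phi z = sprod ell (y - z) + L * (d y - d z)) ->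
  is_argmin Q phi z ->
  subgrad Q d z (d' z) /\ forall y, Q y -> L * bregman d d' z y <= phi y - phi z.
Proof.
move=> clQ cQ hd ell L z L0 phid [Qz zmin].
have [_ [_ [_ [sel _]]]] := hd.
have sz : subgrad Q d z (- L^-1 *: ell).
  move=> y Qy; have := zmin y Qy; rewrite -subr_ge0 phid => h.
  rewrite sprodZl.
  have : 0 <= L^-1 * (sprod ell (y - z) + L * (d y - d z)) by rewrite mulr_ge0 // invr_ge0 ltW.
  rewrite mulrDr mulrA mulVf ?gt_eqF // mul1r; lra.
have Qoz : Qo Q d z by split => //; exists (- L^-1 *: ell).
split; first exact: sel.
move=> y Qy; have := @opt_sel N Q d d' clQ cQ hd z _ Qz sz y Qy.
rewrite sprodBl sprodZl mulNr opprK phid /bregman => h.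
have : 0 <= L * (sprod (d' z) (y - z) + L^-1 * sprod ell (y - z)) by rewrite mulr_ge0 // ltW.
rewrite mulrDr mulrA mulfV ?gt_eqF // mul1r; lra.
Qed.
End S.
Theorem theorem1 (R : realType) (n : nat) (N : 'rV[R]_n -> R)
  (Q : set 'rV[R]_n) (f : 'rV[R]_n -> R) (g : 'rV[R]_n -> 'rV[R]_n) (L : R)
  (d : 'rV[R]_n -> R) (d' : 'rV[R]_n -> 'rV[R]_n)
  (T : nat) (gamma : nat -> R) (Lt : nat -> R)
  (xs us zs xh : nat -> 'rV[R]_n) :
  is_norm N ->
  closed Q -> convex_set Q ->
  convex_fun f -> is_gradient f g ->
  (exists xstar, is_argmin Q f xstar) ->
  0 < L ->
  (forall x y, Q x -> Q y -> dual_norm N (g x - g y) <= L * N (x - y)) ->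
  dgf N Q d d' ->
  (* algorithm parameters *)
  0 < gamma 0%N <= 1 ->
  (forall t, (t <= T.+1)%N -> 0 <= gamma t) ->
  (forall t, (t <= T.+1)%N -> gamma t ^+ 2 <= Gam gamma t) ->
  (* initialization *)
  Lt 0%N = L ->
  is_argmin Q d (xs 0%N) -> d (xs 0%N) = 0 ->
  is_argmin Q (fun x => gamma 0%N * (f (xs 0%N) + sprod (g (xs 0%N)) (x - xs 0%N))
                         + Lt 0%N * d x) (us 0%N) ->
  zs 0%N = us 0%N ->
  (* choice of L_t and z_t, t = 1..T *)
  (forall t, (1 <= t <= T)%N ->
     0 < Lt t <= L /\
     f (us t) <= f (xs t) + sprod (g (xs t)) (us t - xs t)
                 + Lt t / 2 * N (us t - xs t) ^+ 2) ->
  (forall t, (1 <= t <= T)%N -> is_argmin Q (model f g d gamma xs Lt t) (zs t)) ->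
  (* steps, t = 0..T, with tau_t = gamma_{t+1} / Gamma_{t+1} *)
  (forall t, (t <= T)%N ->
     xs t.+1 = (gamma t.+1 / Gam gamma t.+1) *: zs t
               + (1 - gamma t.+1 / Gam gamma t.+1) *: us t) ->
  (forall t, (t <= T)%N ->
     is_prox Q d d' (zs t) ((gamma t.+1 / Lt t) *: g (xs t.+1)) (xh t.+1)) ->
  (forall t, (t <= T)%N ->
     us t.+1 = (gamma t.+1 / Gam gamma t.+1) *: xh t.+1
               + (1 - gamma t.+1 / Gam gamma t.+1) *: us t) ->
  forall t, (t <= T)%N ->
    Gam gamma t * f (us t)
    + \sum_(k < t) (Lt k.+1 - Lt k) * (d (zs k.+1) - 2^-1 * N (zs k - xh k.+1) ^+ 2)
    <= psi Q f g d gamma xs Lt t.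
Proof.
move=> hN clQ cQ cf hg _ Lpos Lip hd /andP[g0p g01] gnn g2 Lt0 x0min dx0 u0min z0u0
  Lch zmin xst xhp ust.
have [d0 [cd [sc _]]] := hd.
have LtP : forall t, (t <= T)%N -> 0 < Lt t.
  case=> [|t] tT; first by rewrite Lt0.
  by have [/andP[]] := Lch t.+1 tT.
have Zmin : forall t, (t <= T)%N -> is_argmin Q (model f g d gamma xs Lt t) (zs t).
  case=> [|t] tT; last exact: zmin.
  rewrite z0u0.
  have -> : model f g d gamma xs Lt 0 = (fun x => gamma 0%N * (f (xs 0%N)
      + sprod (g (xs 0%N)) (x - xs 0%N)) + Lt 0%N * d x).
    by apply: funext => x; rewrite /model big_ord1.
  exact: u0min.
have GamS : forall t, Gam gamma t.+1 = Gam gamma t + gamma t.+1.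
  by move=> t; rewrite /Gam big_ord_recr.
have GamP : forall t, (t <= T.+1)%N -> 0 < Gam gamma t.
  elim=> [|t IH] tT; first by rewrite /Gam big_ord1.
  rewrite GamS; have := IH (ltnW tT); have := gnn t.+1 tT; lra.
have Qz : forall t, (t <= T)%N -> Q (zs t) by move=> t tT; have [] := Zmin t tT.
elim=> [|t IH] tT.
  rewrite big_ord0 addr0 /psi (@psi_min R n _ _ _ (Zmin 0%N tT)) z0u0.
  rewrite /Gam big_ord1 /model big_ord1 Lt0.
  have [Qx0 x0m] := x0min; have [Qu0 _] := u0min.
  have desc := @descent R n f g N Q L hN cQ cf hg Lip (ltW Lpos) _ _ Qx0 Qu0.
  pose A := fun _ : 'rV[R]_n => (0 : R).
  have Aff : forall x y l, A (l *: x + (1 - l) *: y) = l * A x + (1 - l) * A y.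
    by move=> *; rewrite /A; ring.
  have dlb := @qgrowth R n Q N (fun y => A y + 1 * d y) 1 (xs 0%N) ler01 Qx0
    (fun w Qw => ltac:(rewrite /A !add0r !mul1r; exact: x0m w Qw))
    (fun x l Qx l01 => @sc_aff R n Q N d A 1 sc ler01 Aff (xs 0%N) x l Qx Qx0 l01)
    (fun x l Qx l01 => @convQ R n Q cQ _ _ _ Qx Qx0 l01) (us 0%N) Qu0.
  rewrite /A !add0r !mul1r dx0 add0r in dlb.
  move: desc dlb; set M := N _ ^+ 2; set S := sprod _ _.
  have M0 : 0 <= M by rewrite sqr_ge0.
  move=> desc dlb.
  change (gamma 0%N * f (us 0%N) <= gamma 0%N * (f (xs 0%N) + S) + L * d (us 0%N)).
  have h1 : gamma 0%N * f (us 0%N) <= gamma 0%N * (f (xs 0%N) + S + L / 2 * M).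
    by rewrite ler_wpM2l // ltW.
  have h2 : 0 <= (1 - gamma 0%N) * (L * M) by rewrite mulr_ge0 ?subr_ge0 // mulr_ge0 // ltW.
  have h3 : L * (2^-1 * M) <= L * d (us 0%N) by rewrite ler_wpM2l // ltW.
  nra.
have tT' : (t <= T)%N := ltnW tT.
have IH' := IH tT'.
rewrite /psi (@psi_min R n _ _ _ (Zmin _ tT')) in IH'.
rewrite /psi (@psi_min R n _ _ _ (Zmin _ tT)) big_ord_recr /= model_step.
have Lp := LtP t tT'.
have [/andP[Lp' _] Lsm] := Lch t.+1 tT.
have Gp := GamP t (leqW tT').
have Gp' := GamP t.+1 (leqW tT).
have gp := gnn t.+1 (leqW tT).
have g2' := g2 t.+1 (leqW tT).
have [Qxh xhmin] := xhp t tT'.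
have Qz' := Qz _ tT.
have Qzt := Qz _ tT'.
have [sgz kin] := @key_ineq R n N Q d d' (model f g d gamma xs Lt t) clQ cQ hd
  (\sum_(k < t.+1) gamma k *: g (xs k)) (Lt t) (zs t) Lp
  (fun y => @model_diff R n f g d gamma xs Lt t y (zs t)) (Zmin t tT').
have kz := kin _ Qz'.
have bl := @breg_lb R n N Q d d' cQ sc (zs t) Qzt sgz (xh t.+1) Qxh.
have pr := xhmin _ Qz'.
rewrite !sprodZl in pr.
have ci := @grad_ineq R n f g cf hg (xs t.+1) (us t).
set G := Gam gamma t in Gp IH' *.
set G' := Gam gamma t.+1 in Gp' Lsm xst ust *.
set ga := gamma t.+1 in gp g2' pr xst ust *.
have GG : G' = G + ga by rewrite /G' GamS.
set tau := ga / G'.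
set x := xs t.+1 in Lsm ci *.
set u := us t in ci xst ust *.
set u' := us t.+1 in Lsm ust *.
set z := zs t in kz bl pr *.
set z' := zs t.+1 in kz pr *.
set xh1 := xh t.+1 in bl pr *.
set gx := g x in ci pr *.
have ex := xst t tT'; have eu := ust t tT'.
rewrite -/x -/u -/z -/ga -/G' -/tau in ex; rewrite -/u' -/u -/xh1 -/ga -/G' -/tau in eu.
have G'0 : G' != 0 by rewrite gt_eqF.
have v1 : G *: (u - x) + ga *: (z' - x) = ga *: (z' - z).
  rewrite ex; apply/rowP => i; rewrite !mxE /tau GG; field.
  by rewrite -GG.
have v2 : u' - x = tau *: (xh1 - z).
  rewrite ex eu; apply/rowP => i; rewrite !mxE; ring.
have c4 : G * sprod gx (u - x) + ga * sprod gx (z' - x) = ga * sprod gx (z' - z).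
  by rewrite -!sprodZr -sprodDr v1.
have [N0 [_ [NZ _]]] := hN.
have tau0 : 0 <= tau by rewrite divr_ge0 // ltW.
have Nu : N (u' - x) ^+ 2 = tau ^+ 2 * N (xh1 - z) ^+ 2.
  by rewrite v2 NZ ger0_norm // exprMn.
have c5 : G' * sprod gx (u' - x) = ga * sprod gx (xh1 - z).
  by rewrite v2 sprodZr mulrA /tau mulrCA mulfV // mulr1.
have ttau : G' * tau ^+ 2 <= 1.
  have -> : G' * tau ^+ 2 = ga ^+ 2 / G' by rewrite /tau; field.
  by rewrite (ler_pdivrMr _ _ Gp') mul1r.
have Nsym : N (z - xh1) = N (xh1 - z).
  by rewrite -opprB -scaleN1r NZ normrN normr1 mul1r.
rewrite Nsym.
set Nq := N (xh1 - z) ^+ 2 in Nu bl *.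
have Nq0 : 0 <= Nq by rewrite sqr_ge0.
rewrite Nu in Lsm.
have Lt'0 := ltW Lp'.
have c1 : G * f x + G * sprod gx (u - x) <= G * f u.
  by rewrite -mulrDr ler_wpM2l // ltW.
have c2 : G' * f u' <= G' * f x + ga * sprod gx (xh1 - z) + Lt t.+1 / 2 * Nq.
  have : G' * f u' <= G' * (f x + sprod gx (u' - x) + Lt t.+1 / 2 * (tau ^+ 2 * Nq)).
    by rewrite ler_wpM2l // ltW.
  rewrite !mulrDr c5.
  have : G' * (Lt t.+1 / 2 * (tau ^+ 2 * Nq)) <= Lt t.+1 / 2 * Nq.
    rewrite -subr_ge0 (_ : _ - _ = (1 - G' * tau ^+ 2) * (Lt t.+1 / 2 * Nq)); last by ring.
    by rewrite mulr_ge0 ?subr_ge0 // mulr_ge0 // divr_ge0.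
  lra.
have c3 : ga * sprod gx (xh1 - z) + Lt t * (2^-1 * Nq)
          <= ga * sprod gx (z' - z) + Lt t * bregman d d' z z'.
  set BB1 := bregman d d' z z' in pr *; set BB2 := bregman d d' z xh1 in pr bl *.
  have : Lt t * (ga / Lt t * sprod gx (xh1 - z) + BB2) <=
         Lt t * (ga / Lt t * sprod gx (z' - z) + BB1).
    by rewrite ler_wpM2l // ltW.
  have E : forall a, Lt t * (ga / Lt t * a) = ga * a.
    by move=> a; field; rewrite gt_eqF.
  have -> : Lt t * (ga / Lt t * sprod gx (xh1 - z) + BB2) =
    ga * sprod gx (xh1 - z) + Lt t * BB2 by rewrite mulrDr E.
  have -> : Lt t * (ga / Lt t * sprod gx (z' - z) + BB1) =
    ga * sprod gx (z' - z) + Lt t * BB1 by rewrite mulrDr E.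
  have : Lt t * (2^-1 * Nq) <= Lt t * BB2 by rewrite ler_wpM2l // ltW.
  set q1 := Lt t * (2^-1 * Nq); set q2 := Lt t * BB2.
  set q3 := ga * sprod gx (xh1 - z); set q4 := ga * sprod gx (z' - z); set q5 := Lt t * BB1.
  lra.
have c6 : G' * f x = G * f x + ga * f x by rewrite GG mulrDl.
move: IH' kz c1 c2 c3 c4 c6.
set S := \sum_(i < t) _.
set Mz := model _ _ _ _ _ _ t z.
set Mz' := model _ _ _ _ _ _ t z'.
set B1 := bregman d d' z z'.
lra.
Qed.
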